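(* Let $X=\{x_j\mid j\in J\}$ be a set and $\tilde q$ a symbol not in $X$. Let $V$ be the $\mathbf{k}$-vector space with basis $X\cup\{\tilde q\}$, $T(V)$ its tensor algebra, and $I$ the two-sided ideal of $T(V)$ generated by $\{\tilde q\otimes\tilde q-\tilde q\}\cup\{\tilde q\otimes a\otimes\tilde q-\tilde q\otimes a\mid a\in T(V)\}$. Let $\hat A:=T(V)/I$, $\hat q:=\tilde q+I$, and define $\hat i:X\to(\hat A,\hat q)$ by $\hat i(x_j)=x_j+I$. Then $((\hat A,\hat q),\hat i)$ is the free invariant algebra generated by $X$: for every invariant algebra $(A,q)$ and every map $\theta:X\to(A,q)$ there is a unique invariant homomorphism $\hat\theta:(\hat A,\hat q)\to(A,q)$ with $\hat\theta\circ\hat i=\theta$.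
   Context: All associative algebras have an identity. For an associative algebra $A$ with idempotent $q$, the invariant algebra is $(A,q):=\{x\in A\mid qxq=qx\}$ (a subalgebra containing $1$ and $q$). For invariant algebras $(A,q_A),(B,q_B)$, an invariant homomorphism is a linear map $\phi$ with $\phi(xy)=\phi(x)\phi(y)$, $\phi(1_A)=1_B$, $\phi(q_A)=q_B$. *)

(* Defs.v *)
From HB Require Import structures.
From mathcomp Require Import all_boot all_algebra generic_quotient.
From mathcomp Require Import monalg.
From mathcomp Require Import boolp.

Set Implicit Arguments.
Unset Strict Implicit.
Unset Printing Implicit Defensive.

Import GRing.Theory.
Local Open Scope ring_scope.
Local Open Scope quotient_scope.

Definition inv_mem (k : pzRingType) (A : algType k) (q x : A) : Prop :=
  q * x * q = q * x.
Arguments inv_mem {k} A q x.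

Section FreeInvariant.
Variables (k : fieldType) (J : choiceType).

(* Basis of V : X ∪ {q~}, with x_j = Some j and q~ = None. *)
Definition basisV := option J.

(* Tensor algebra T(V) = free associative k-algebra on basisV
   = monoid algebra of the free monoid on basisV. *)
Definition TV := {malg k[{fmonom basisV}]}.

Definition tq : TV := << fmu (None : basisV) >>.
Definition tx (j : J) : TV := << fmu (Some j) >>.

Definition gens (g : TV) : Prop :=
  g = tq * tq - tq \/ exists a : TV, g = tq * a * tq - tq * a.

Definition two_sided_ideal (S : TV -> Prop) : Prop :=
  [/\ S 0, (forall x y, S x -> S y -> S (x - y)),
      (forall a x, S x -> S (a * x)) & (forall a x, S x -> S (x * a))].

Definition idealI (x : TV) : Prop :=
  forall S, two_sided_ideal S -> (forall g, gens g -> S g) -> S x.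

Lemma idealI_ideal : two_sided_ideal idealI.
Proof.
split.
- by move=> S [] .
- by move=> x y Hx Hy S HS Hg; case: (HS) => _ Hs _ _; apply: Hs; [apply: Hx|apply: Hy].
- by move=> a x Hx S HS Hg; case: (HS) => _ _ Hl _; apply: Hl; apply: Hx.
- by move=> a x Hx S HS Hg; case: (HS) => _ _ _ Hr; apply: Hr; apply: Hx.
Qed.

Definition congI (a b : TV) : bool := `[< idealI (a - b) >].

Lemma congI_refl : reflexive congI.
Proof.
by move=> x; rewrite /congI subrr; apply/asboolP; case: idealI_ideal.
Qed.

Lemma congI_sym : symmetric congI.
Proof.
have [H0 Hsub _ _] := idealI_ideal.
suff H : forall x y, congI x y -> congI y x.
  by move=> x y; apply/idP/idP; apply: H.
move=> x y /asboolP Hxy; apply/asboolP.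
have -> : y - x = 0 - (x - y) by rewrite sub0r opprB.
exact: (Hsub).
Qed.

Lemma congI_trans : transitive congI.
Proof.
have [H0 Hsub _ _] := idealI_ideal.
move=> y x z /asboolP Hxy /asboolP Hyz; apply/asboolP.
have -> : x - z = (x - y) - (z - y) by rewrite opprB addrA subrK.
apply: (Hsub) => //; have -> : z - y = 0 - (y - z) by rewrite sub0r opprB.
exact: (Hsub).
Qed.

Definition congI_rel := EquivRel congI congI_refl congI_sym congI_trans.

Definition Ahat := {eq_quot congI_rel}.

(* Operations of Â induced from T(V) (well-defined since I is an ideal). *)
Definition piA (a : TV) : Ahat := \pi_Ahat a.
Definition addA (x y : Ahat) : Ahat := piA (repr x + repr y).
Definition scaleA (c : k) (x : Ahat) : Ahat := piA (c *: repr x).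
Definition mulA (x y : Ahat) : Ahat := piA (repr x * repr y).
Definition oneA : Ahat := piA 1.
Definition qhat : Ahat := piA tq.
Definition ihat (j : J) : Ahat := piA (tx j).

Definition inv_memA (x : Ahat) : Prop :=
  mulA (mulA qhat x) qhat = mulA qhat x.

Definition inv_homA (A : algType k) (q : A) (phi : Ahat -> A) : Prop :=
  (forall x, inv_memA x -> inv_mem A q (phi x)) /\
  (forall x y, inv_memA x -> inv_memA y -> phi (addA x y) = phi x + phi y) /\
  (forall c x, inv_memA x -> phi (scaleA c x) = c *: phi x) /\
  (forall x y, inv_memA x -> inv_memA y -> phi (mulA x y) = phi x * phi y) /\
  phi oneA = 1 /\ phi qhat = q.

End FreeInvariant.

(* Main.v *)
Require Import Defs.
From HB Require Import structures.
From mathcomp Require Import all_boot all_algebra generic_quotient.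
From mathcomp Require Import monalg boolp.
Import GRing.Theory.
Local Open Scope ring_scope.

Section Hom.
Variables (k : fieldType) (J : choiceType) (A : algType k) (q : A) (theta : J -> A).
Definition gV (i : basisV J) : A := if i is Some j then theta j else q.
Definition hm (m : {fmonom (basisV J)}) : A :=
  foldr (fun i acc => gV i * acc) 1 (fmonom_val m).
Lemma hm_mm : mmorphism hm.
Proof.
split.
- move=> m1 m2; rewrite /hm fmM foldr_cat.
  elim: (fmonom_val m1) => [|i s IH] /=; first by rewrite mul1r.
  by rewrite IH mulrA.
- by rewrite /hm fm1.
Qed.
HB.instance Definition _ := isMultiplicative.Build _ _ hm hm_mm.
Definition Phi (a : TV k J) : A := mmap (in_alg A) hm a.

Lemma PhiM a b : Phi (a * b) = Phi a * Phi b.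
Proof.
have := commr_mmap_is_multiplicative (f := in_alg A) (h := hm)
  (fun g m m' => comm_alg _ _).
by move=> H; exact: H.1 a b.
Qed.
Lemma PhiB a b : Phi (a - b) = Phi a - Phi b.
Proof. exact: mmapB. Qed.
Lemma PhiD a b : Phi (a + b) = Phi a + Phi b.
Proof. exact: mmapD. Qed.
Lemma Phi0 : Phi 0 = 0.
Proof. exact: mmap0. Qed.
Lemma Phi1 : Phi 1 = 1.
Proof. exact: mmap1. Qed.
Lemma PhiZ c a : Phi (c *: a) = c *: Phi a.
Proof. by rewrite /Phi mmapZ /= mulr_algl. Qed.
Lemma PhiU m : Phi << m >> = hm m.
Proof. by rewrite /Phi mmapU /= scale1r mul1r. Qed.
Lemma PhiUi i : Phi << fmu i >> = gV i.
Proof. by rewrite PhiU /hm fmU /= mulr1. Qed.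

Hypothesis qq : q * q = q.
Definition invq (y : A) := q * y * q = q * y.
Lemma invD x y : invq x -> invq y -> invq (x + y).
Proof. by rewrite /invq => hx hy; rewrite mulrDr mulrDl hx hy. Qed.
Lemma invM x y : invq x -> invq y -> invq (x * y).
Proof.
rewrite /invq => hx hy.
transitivity (q * x * (q * y * q)); first by rewrite !mulrA hx.
by rewrite hy !mulrA hx.
Qed.
Lemma invC c : invq c%:A.
Proof. by rewrite /invq -(comm_alg c q) -mulrA qq. Qed.
Lemma inv0 : invq 0.
Proof. by rewrite /invq mulr0 mul0r. Qed.
Hypothesis htheta : forall j, inv_mem A q (theta j).
Lemma invg i : invq (gV i).
Proof. case: i => [j|] /=; first exact: htheta. by rewrite /invq qq. Qed.
Lemma invhm m : invq (hm m).
Proof.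
rewrite /hm; elim: (fmonom_val m) => [|i s IH] /=.
  by rewrite /invq mulr1 qq.
by apply: invM => //; apply: invg.
Qed.
Lemma invPhi a : invq (Phi a).
Proof.
rewrite /Phi mmapE; apply: (big_ind invq) => //.
- exact: inv0.
- exact: invD.
- by move=> m _; rewrite in_algE; apply: invM; [apply: invC|apply: invhm].
Qed.

Lemma Phi_ideal x : idealI x -> Phi x = 0.
Proof.
move=> Hx; apply: (Hx (fun x => Phi x = 0)).
- split.
  + exact: Phi0.
  + by move=> a b ha hb; rewrite PhiB ha hb subrr.
  + by move=> a b hb; rewrite PhiM hb mulr0.
  + by move=> a b hb; rewrite PhiM hb mul0r.
- move=> g [->|[a ->]]; rewrite PhiB !PhiM /tq PhiUi /=.
  + by rewrite qq subrr.
  + by have := invPhi a; rewrite /invq => ->; rewrite subrr.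
Qed.
End Hom.

Section Quot.
Variables (k : fieldType) (J : choiceType).
Local Notation TV := (TV k J).
Local Notation Ahat := (Ahat k J).

Lemma idealI_add (x y : TV) : idealI x -> idealI y -> idealI (x + y).
Proof.
have [H0 Hsub _ _] := @idealI_ideal k J.
move=> hx hy; have := Hsub x (0 - y) hx (Hsub 0 y H0 hy).
by rewrite sub0r opprK.
Qed.
Lemma idealI_mull (a x : TV) : idealI x -> idealI (a * x).
Proof. by have [_ _ Hl _] := @idealI_ideal k J; apply: Hl. Qed.
Lemma idealI_mulr (a x : TV) : idealI x -> idealI (x * a).
Proof. by have [_ _ _ Hr] := @idealI_ideal k J; apply: Hr. Qed.
Lemma idealI_gens (g : TV) : gens g -> idealI g.
Proof. by move=> Hg S _ HS; apply: HS. Qed.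

Lemma piA_eq (a b : TV) : idealI (a - b) -> piA a = piA b.
Proof.
move=> H; rewrite /piA; apply/eqquotP; rewrite /= /congI.
by apply/asboolP.
Qed.
Lemma repr_piA (a : TV) : idealI (repr (piA a) - a).
Proof.
have : piA (repr (piA a)) = piA a by rewrite /piA reprK.
by rewrite /piA => /eqquotP; rewrite /= /congI => /asboolP.
Qed.
Lemma piA_repr (x : Ahat) : piA (repr x) = x.
Proof. by rewrite /piA reprK. Qed.

Lemma addA_pi (a b : TV) : Defs.addA (piA a) (piA b) = piA (a + b).
Proof.
rewrite /Defs.addA; apply: piA_eq; rewrite opprD addrACA.
by apply: idealI_add; apply: repr_piA.
Qed.
Lemma mulA_pi (a b : TV) : Defs.mulA (piA a) (piA b) = piA (a * b).
Proof.
rewrite /Defs.mulA; apply: piA_eq.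
set ra := repr (piA a); set rb := repr (piA b).
have -> : ra * rb - a * b = (ra - a) * rb + a * (rb - b).
  by rewrite mulrBl mulrBr addrA subrK.
apply: idealI_add; [apply: idealI_mulr|apply: idealI_mull]; apply: repr_piA.
Qed.
Lemma scaleA_pi c (a : TV) : scaleA c (piA a) = piA (c *: a).
Proof.
rewrite /scaleA; apply: piA_eq; rewrite -scalerBr -mul_malgC.
by apply: idealI_mull; apply: repr_piA.
Qed.

Lemma all_inv (x : Ahat) : inv_memA x.
Proof.
rewrite /inv_memA -(piA_repr x) /qhat !mulA_pi; apply: piA_eq.
apply: idealI_gens; right; by exists (repr x).
Qed.
End Quot.

Theorem proposition2p1 (k : fieldType) (J : choiceType) :
  (forall j : J, inv_memA (ihat k j)) /\
  forall (A : algType k) (q : A), q * q = q ->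
  forall theta : J -> A, (forall j, inv_mem A q (theta j)) ->
  exists phi : Ahat k J -> A,
    [/\ inv_homA q phi, (forall j, phi (ihat k j) = theta j) &
        forall psi : Ahat k J -> A, inv_homA q psi ->
          (forall j, psi (ihat k j) = theta j) ->
          forall x, inv_memA x -> psi x = phi x].
Proof.
split; first by move=> j; apply: all_inv.
move=> A q qq theta htheta.
pose P := @Phi k J A q theta.
have phi_pi : forall a, P (repr (piA a)) = P a.
  move=> a; apply/eqP; rewrite -subr_eq0; apply/eqP.
  by rewrite /P -PhiB; apply: (Phi_ideal _ _ _ _ _ qq htheta); apply: repr_piA.
exists (fun x => P (repr x)); split.
- split; [|split; [|split; [|split; [|split]]]].
  + by move=> x _; apply: (invPhi _ _ _ _ _ qq htheta).
  + by move=> x y _ _; rewrite /Defs.addA phi_pi /P PhiD.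
  + by move=> c x _; rewrite /scaleA phi_pi /P PhiZ.
  + by move=> x y _ _; rewrite /Defs.mulA phi_pi /P PhiM.
  + by rewrite /oneA phi_pi /P Phi1.
  + by rewrite /qhat phi_pi /P /tq PhiUi.
- by move=> j; rewrite /ihat phi_pi /P /tx PhiUi.
- move=> psi [_ [hadd [hsc [hmul [h1 hq]]]]] hi.
  have key : forall a, psi (piA a) = P a.
    move=> a; rewrite (monalgE a).
    apply: (big_ind (fun a => psi (piA a) = P a)).
    + have -> : piA (0 : TV k J) = scaleA 0 (piA 0) by rewrite scaleA_pi scale0r.
      rewrite hsc; last exact: all_inv.
      by rewrite scale0r /P Phi0.
    + move=> a1 a2 e1 e2; rewrite -addA_pi hadd; try exact: all_inv.
      by rewrite e1 e2 /P PhiD.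
    + move=> m _.
      have -> : << a@_m *g m >> = (a@_m) *: (<< m >> : TV k J).
        by apply/malgP => m'; rewrite mcoeffZ !mcoeffU mulr_natr.
      rewrite -scaleA_pi hsc; last exact: all_inv.
      rewrite /P PhiZ; congr (_ *: _).
      case: m => s; elim: s => [|i s IH].
      * have -> : FMonom [::] = (mone : {fmonom basisV J}) by apply: val_inj; rewrite /= fm1.
        by rewrite mpolyC1E Phi1 -h1.
      * have -> : FMonom (i :: s) = mmul (fmu i) (FMonom s : {fmonom basisV J}).
          by apply: val_inj; rewrite /= fmM fmU.
        have -> : (<< mmul (fmu i) (FMonom s) >> : TV k J) = << fmu i >> * << FMonom s >>.
          by rewrite malgM_def fgmulUU mulr1.
        rewrite -mulA_pi hmul; try exact: all_inv.
        rewrite IH PhiM PhiUi; congr (_ * _).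
        by case: i => [j|]; [apply: hi|apply: hq].
  by move=> x _; rewrite -{1}(piA_repr _ _ x) key.
Qed.
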